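(* Let $G$ be a unimodular locally compact group and let $\nu$ be a measure on $G$. Then: (a) $\nu$ is upper translation bounded if and only if $\mathrm{L}_\nu^+$ is finite; (b) $\nu$ is lower translation bounded if and only if $\mathrm{L}_\nu^-$ is positive; (c) $\nu$ is a Delone measure if and only if $\mathrm{L}_\nu^-$ is positive and $\mathrm{L}_\nu^+$ is finite.
   Context: A measure is a positive Borel measure. $\nu$ is upper translation bounded if there exist $C_u<\infty$ and a compact symmetric unit neighborhood $B_u$ with $\sup_{x\in G}\nu(B_ux)\le C_u$; lower translation bounded if there exist $C_l>0$ and a compact symmetric unit neighborhood $B_l$ with $\inf_{x\in G}\nu(B_lx)\ge C_l$; a Delone measure if both. With a Haar measure $m$, $\mathcal K$ the nonempty compact subsets and $\mathcal K_p$ those of positive Haar measure: $\mathrm{L}_\nu^-=\sup_{K\in \mathcal K}\inf_{A\in \mathcal K_p} \nu(KA)/m(A)$, $\mathrm{L}_\nu^+=\inf_{K\in \mathcal K}\sup_{A\in \mathcal K_p} \nu(A)/m(KA)$. *)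

(* Defs.v *)
From HB Require Import structures.
From mathcomp Require Import all_boot all_order all_algebra.
From mathcomp Require Import all_classical all_reals all_analysis.
Set Implicit Arguments. Unset Strict Implicit. Unset Printing Implicit Defensive.
Import Order.TTheory GRing.Theory Num.Theory.
Local Open Scope classical_set_scope.
Local Open Scope ring_scope.

#[short(type="topMeasurableType")]
HB.structure Definition TopMeasurable (d : measure_display) :=
  {T of Topological T & Measurable d T}.

Section LCGroup.
Context {d : measure_display} {G : topMeasurableType d}.
Variables (mul : G -> G -> G) (inv : G -> G) (e : G).

Definition lc_group : Prop :=
  [/\ ((forall x y z, mul x (mul y z) = mul (mul x y) z) /\
       (forall x, mul e x = x) /\ (forall x, mul x e = x)),
      ((forall x, mul (inv x) x = e) /\ (forall x, mul x (inv x) = e)),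
      (continuous (fun p : G * G => mul p.1 p.2) /\ continuous inv),
      (hausdorff_space G /\ locally_compact [set: G])
    & @measurable d G = <<s open >>].

Definition setmul (A B : set G) : set G :=
  [set z | exists2 a, A a & exists2 b, B b & z = mul a b].
Definition lshift (x : G) (A : set G) : set G := [set mul x a | a in A].
Definition rshift (A : set G) (x : G) : set G := [set mul a x | a in A].

Variable R : realType.
Local Open Scope ereal_scope.

Definition haar_measure (m : {measure set G -> \bar R}) : Prop :=
  [/\ (forall x A, measurable A -> m (lshift x A) = m A),
      (forall K, compact K -> m K < +oo),
      (forall U, open U -> U !=set0 -> 0 < m U),
      (forall A, measurable A ->
          m A = ereal_inf [set m U | U in [set U | open U /\ A `<=` U]])
    & (forall U, open U ->
          m U = ereal_sup [set m K | K in [set K | compact K /\ K `<=` U]])].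

Definition right_invariant (m : {measure set G -> \bar R}) : Prop :=
  forall x A, measurable A -> m (rshift A x) = m A.

(* Unimodular: the modular function is trivial, i.e. every left Haar measure
   is also right invariant. *)
Definition unimodular : Prop :=
  forall m : {measure set G -> \bar R}, haar_measure m -> right_invariant m.

Definition sym_unit_nbhd (B : set G) : Prop :=
  [/\ compact B, (forall x, B x -> B (inv x)) & nbhs e B].

Definition upper_translation_bounded (nu : {measure set G -> \bar R}) : Prop :=
  exists (C : R) (B : set G), sym_unit_nbhd B /\
    forall x, nu (rshift B x) <= C%:E.

Definition lower_translation_bounded (nu : {measure set G -> \bar R}) : Prop :=
  exists (C : R) (B : set G), [/\ (0 < C)%R, sym_unit_nbhd B &
    forall x, C%:E <= nu (rshift B x)].

Definition delone_measure (nu : {measure set G -> \bar R}) : Prop :=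
  upper_translation_bounded nu /\ lower_translation_bounded nu.

Definition cK : set (set G) := [set K | compact K /\ K !=set0].

Definition cKp (m : {measure set G -> \bar R}) : set (set G) :=
  [set A | compact A /\ 0 < m A].

(* ratio a / b for b a (finite, positive) Haar measure value *)
Definition eratio (a b : \bar R) : \bar R := a * ((fine b)^-1)%:E.

Definition Lminus (m nu : {measure set G -> \bar R}) : \bar R :=
  ereal_sup [set ereal_inf [set eratio (nu (setmul K A)) (m A) | A in cKp m]
            | K in cK].

Definition Lplus (m nu : {measure set G -> \bar R}) : \bar R :=
  ereal_inf [set ereal_sup [set eratio (nu A) (m (setmul K A)) | A in cKp m]
            | K in cK].

End LCGroup.

(* Main.v *)
Require Import Defs.
From HB Require Import structures.
From mathcomp Require Import all_boot all_order all_algebra.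
From mathcomp Require Import all_classical all_reals all_analysis.
Import Order.TTheory GRing.Theory Num.Theory.
Local Open Scope classical_set_scope.
Local Open Scope ring_scope.
Local Open Scope ereal_scope.

Section Aux.
Variables (d : measure_display) (G : topMeasurableType d)
  (mul : G -> G -> G) (inv : G -> G) (e : G).
Hypothesis HG : lc_group mul inv e.

Lemma g_assoc x y z : mul x (mul y z) = mul (mul x y) z.
Proof. by case: HG => -[]. Qed.
Lemma g_e1 x : mul e x = x.
Proof. by case: HG => -[_ []]. Qed.
Lemma g_1e x : mul x e = x.
Proof. by case: HG => -[_ []]. Qed.
Lemma g_invl x : mul (inv x) x = e.
Proof. by case: HG => _ []. Qed.
Lemma g_invr x : mul x (inv x) = e.
Proof. by case: HG => _ []. Qed.
Lemma g_inv_e : inv e = e.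
Proof. by rewrite -[inv e]g_1e g_invl. Qed.
Lemma g_cmul : continuous (fun p : G * G => mul p.1 p.2).
Proof. by case: HG => _ _ []. Qed.
Lemma g_cinv : continuous inv.
Proof. by case: HG => _ _ []. Qed.
Lemma g_haus : hausdorff_space G.
Proof. by case: HG => _ _ _ []. Qed.
Lemma g_lc : locally_compact [set: G].
Proof. by case: HG => _ _ _ []. Qed.
Lemma meas_open {U : set G} : open U -> d.-measurable U.
Proof.
move=> oU; case: HG => _ _ _ _ hm.
have : <<s open >> U by exact: sub_sigma_algebra.
by rewrite -hm.
Qed.

Lemma meas_closed {U : set G} : closed U -> d.-measurable U.
Proof.
move=> cU; rewrite -(setCK U); apply: measurableC; apply: meas_open.
exact: closed_openC.
Qed.

Lemma meas_compact {U : set G} : compact U -> d.-measurable U.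
Proof. by move=> cU; apply: meas_closed; apply: compact_closed => //; exact: g_haus. Qed.

Lemma cont_rmul c : continuous (fun y => mul y c).
Proof.
move=> y.
apply: (continuous_comp (f := fun y => (y, c)) (g := fun p : G * G => mul p.1 p.2)).
  by apply: cvg_pair; [exact: cvg_id| exact: cvg_cst].
exact: g_cmul.
Qed.

Lemma setmul_compact {A B : set G} : compact A -> compact B -> compact (setmul mul A B).
Proof.
move=> cA cB.
have -> : setmul mul A B = [set mul p.1 p.2 | p in A `*` B].
  apply/seteqP; split=> z.
    by case=> a Aa [b Bb ->]; exists (a, b).
  by case=> -[a b] [/= Aa Bb] <-; exists a => //; exists b.
apply: continuous_compact; last exact: compact_setX.
by apply: continuous_subspaceT => p; exact: g_cmul.
Qed.

Lemma rshift_setmul (A : set G) x : Defs.rshift mul A x = setmul mul A [set x].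
Proof.
apply/seteqP; split=> z.
  by case=> a Aa <-; exists a => //; exists x.
by case=> a Aa [b -> ->]; exists a.
Qed.

Lemma rshift_compact {A : set G} x : compact A -> compact (Defs.rshift mul A x).
Proof. by move=> cA; rewrite rshift_setmul; apply: setmul_compact => //; exact: compact_set1. Qed.

Lemma rshift_open {U : set G} c : open U -> open (Defs.rshift mul U c).
Proof.
move=> oU.
have -> : Defs.rshift mul U c = (fun y => mul y (inv c)) @^-1` U.
  apply/seteqP; split=> z.
    by case=> a Ua <- /=; rewrite -g_assoc g_invr g_1e.
  move=> /= Uz; exists (mul z (inv c)) => //.
  by rewrite -g_assoc g_invl g_1e.
by apply: open_comp => // y _; exact: cont_rmul.
Qed.


Fixpoint inl (x : G) (F : seq G) : Prop :=
  if F is f :: F' then x = f \/ inl x F' else False.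

Definition UU (W : set G) (F : seq G) : set G :=
  \big[setU/set0]_(f <- F) Defs.rshift mul W f.

Lemma UU_cons W f F : UU W (f :: F) = Defs.rshift mul W f `|` UU W F.
Proof. by rewrite /UU big_cons. Qed.

Lemma UU_nil W : UU W [::] = set0.
Proof. by rewrite /UU big_nil. Qed.

Lemma UUP W F x : UU W F x <-> exists f, inl f F /\ Defs.rshift mul W f x.
Proof.
elim: F => [|f F IH]; first by rewrite UU_nil; split => [[]|[? []]].
rewrite UU_cons; split.
  case=> [h|/IH [g [Ig h]]]; first by exists f; split => //; left.
  by exists g; split => //; right.
case=> g [[->|Ig] h]; first by left.
by right; apply/IH; exists g.
Qed.

Fixpoint pdisj (W : set G) (F : seq G) : Prop :=
  if F is f :: F' then Defs.rshift mul W f `&` UU W F' = set0 /\ pdisj W F'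
  else True.

Variable R : realType.

Lemma UU_meas W F : (forall f, d.-measurable (Defs.rshift mul W f)) ->
  d.-measurable (UU W F).
Proof.
move=> mW; elim: F => [|f F IH]; first by rewrite UU_nil.
by rewrite UU_cons; apply: measurableU.
Qed.

Lemma UU_le (mu : {measure set G -> \bar R}) W F :
  (forall f, d.-measurable (Defs.rshift mul W f)) ->
  mu (UU W F) <= \sum_(f <- F) mu (Defs.rshift mul W f).
Proof.
move=> mW; elim: F => [|f F IH]; first by rewrite UU_nil measure0 big_nil.
rewrite UU_cons big_cons.
have h := measureU2 mu (mW f) (@UU_meas W F mW).
apply: (le_trans h).
by apply: leeD.
Qed.

Lemma UU_eq (mu : {measure set G -> \bar R}) W F :
  (forall f, d.-measurable (Defs.rshift mul W f)) -> pdisj W F ->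
  mu (UU W F) = \sum_(f <- F) mu (Defs.rshift mul W f).
Proof.
move=> mW; elim: F => [|f F IH]; first by rewrite UU_nil measure0 big_nil.
move=> /= [dj pF]; rewrite UU_cons big_cons.
rewrite (measureU mu (mW f) (@UU_meas W F mW) dj).
by congr (_ + _)%R; apply: IH.
Qed.

Lemma sum_cst (c : R) (F : seq G) : \sum_(f <- F) c%:E = ((size F)%:R * c)%:E.
Proof.
elim: F => [|f F IH]; first by rewrite big_nil mul0r.
by rewrite big_cons IH /= -EFinD mulrSr mulrDl mul1r addrC.
Qed.


Lemma packing {mu : {measure set G -> \bar R}} {W A S : set G} {w s : R} :
  (forall f, d.-measurable (Defs.rshift mul W f)) ->
  (forall f, mu (Defs.rshift mul W f) = w%:E) -> (0 < w)%R ->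
  d.-measurable S -> mu S <= s%:E ->
  (forall a, A a -> Defs.rshift mul W a `<=` S) ->
  exists F, [/\ (forall f, inl f F -> A f), pdisj W F,
     ((size F)%:R * w <= s)%R &
     forall a, A a -> exists f, inl f F /\ Defs.rshift mul W a `&` Defs.rshift mul W f !=set0].
Proof.
move=> mW muW w0 mS muS AS.
have bnd : forall F, (forall f, inl f F -> A f) -> pdisj W F -> ((size F)%:R * w <= s)%R.
  move=> F FA pF; rewrite -lee_fin -sum_cst.
  have <- : \sum_(f <- F) mu (Defs.rshift mul W f) = \sum_(f <- F) w%:E.
    by apply: eq_bigr => f _; exact: muW.
  rewrite -(UU_eq mu W F mW pF); apply: le_trans muS.
  apply: le_measure; rewrite ?inE //; first exact: UU_meas.
  by move=> z /UUP [f [If hf]]; exact: (AS f (FA f If)).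
case: (pselect (exists F, [/\ (forall f, inl f F -> A f), pdisj W F,
     ((size F)%:R * w <= s)%R &
     forall a, A a -> exists f, inl f F /\ Defs.rshift mul W a `&` Defs.rshift mul W f !=set0])) => // Hn.
exfalso.
have ext : forall F, (forall f, inl f F -> A f) -> pdisj W F ->
    exists F', [/\ (forall f, inl f F' -> A f), pdisj W F' & size F' = (size F).+1].
  move=> F FA pF.
  have [a [Aa Ha]] : exists a, A a /\ ~ exists f, inl f F /\
      Defs.rshift mul W a `&` Defs.rshift mul W f !=set0.
    apply: contra_notP Hn => H; exists F; split => //; first exact: bnd.
    move=> a Aa.
    apply: contra_notP H => H; exists a; split => //.
  exists (a :: F); split => //.
    by move=> f [->|If] //; exact: FA.
  split => //; apply/seteqP; split => z // [hz /UUP [f [If hf]]].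
  by apply: Ha; exists f; split => //; exists z.
have all : forall k, exists F, [/\ (forall f, inl f F -> A f), pdisj W F & size F = k].
  elim=> [|k [F [FA pF sF]]]; first by exists [::].
  by have [F' [? ? sF']] := ext F FA pF; exists F'; rewrite sF' sF.
have [F [FA pF sF]] := all (Num.Def.archi_bound (s / w)).
have := bnd F FA pF; rewrite sF.
have := @archi_boundP _ (s / w).
set k := Num.Def.archi_bound (s / w) => hb hk.
have [sw0|sw0] := leP 0%R (s / w)%R.
  have := hb sw0; rewrite ltr_pdivrMr // => /(le_lt_trans hk).
  by rewrite ltxx.
have w0' : (0 < w^-1)%R by rewrite invr_gt0.
have : (s < 0)%R by rewrite -(pmulr_llt0 s w0').
move=> /(le_lt_trans hk); rewrite ltNge => /negP; apply.
by apply: mulr_ge0 => //; exact: ltW.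
Qed.


Lemma g_invK x : inv (inv x) = x.
Proof.
by rewrite -[inv (inv x)]g_1e -(g_invl x) g_assoc g_invl g_e1.
Qed.

Lemma exists_sym : exists B, sym_unit_nbhd inv e B.
Proof.
have [V nV [cV clV]] : compact_near (within [set: G] (nbhs e)) := g_lc e I.
rewrite withinET in nV.
exists (V `&` (inv @^-1` V)); split.
- apply: compact_closedI => //; apply: preimage_closed => // x _.
  exact: g_cinv.
- by move=> x [Vx Vix]; split => //=; rewrite g_invK.
- apply: filterI => //.
  have h : inv @ e --> inv e := g_cinv e.
  by rewrite g_inv_e in h; apply: h.
Qed.

Lemma exists_W {B : set G} : nbhs e B ->
  exists W, [/\ open W, W e & forall x y, W x -> W y -> B (mul (inv x) y)].
Proof.
move=> nB.
have c : {for (e, e), continuous (fun p : G * G => mul (inv p.1) p.2)}.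
  apply: (continuous_comp (f := fun p : G * G => (inv p.1, p.2))
     (g := fun p : G * G => mul p.1 p.2)); last exact: g_cmul.
  apply: cvg_pair; last exact: cvg_snd.
  apply: (continuous_comp (f := fst) (g := inv)); last exact: g_cinv.
  exact: cvg_fst.
have : nbhs (e, e) ((fun p : G * G => mul (inv p.1) p.2) @^-1` B).
  by apply: c; rewrite /= g_inv_e g_e1.
case=> -[P Q] /= [nP nQ] sPQ.
exists (P `&` Q)°; split.
- exact: open_interior.
- exact: filterI.
- move=> x y /interior_subset [Px _] /interior_subset [_ Qy].
  exact: (sPQ (x, y)).
Qed.

Variables (m : {measure set G -> \bar R}).
Hypothesis Hm : haar_measure mul m.
Hypothesis Hun : unimodular mul R.

Lemma m_rshift {A : set G} x : d.-measurable A -> m (Defs.rshift mul A x) = m A.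
Proof. by move=> mA; exact: (Hun m Hm x A mA). Qed.

Lemma m_lshift {A : set G} x : d.-measurable A -> m (Defs.lshift mul x A) = m A.
Proof. by move=> mA; case: Hm => h _ _ _ _; apply: h. Qed.

Lemma m_fin {K : set G} : compact K -> m K < +oo.
Proof. by move=> cK; case: Hm => _ h _ _ _; apply: h. Qed.

Lemma m_pos {B : set G} {x : G} : nbhs x B -> d.-measurable B -> 0 < m B.
Proof.
move=> nB mB.
have : 0 < m B° by case: Hm => _ _ h _ _; apply: h; [exact: open_interior| exists x].
move=> /lt_le_trans; apply; apply: le_measure; rewrite ?inE //.
  by apply: meas_open; exact: open_interior.
exact: interior_subset.
Qed.

Lemma m_real {K : set G} : compact K -> m K = (fine (m K))%:E.
Proof. by move=> cK; rewrite fineK // ge0_fin_numE ?m_fin. Qed.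


Lemma part_a1 (nu : {measure set G -> \bar R}) :
  upper_translation_bounded mul inv e nu -> Lplus mul m nu < +oo.
Proof.
case=> C [B [[cB symB nB] hB]].
have mB : d.-measurable B := meas_compact cB.
have C0 : (0 <= C)%R.
  by rewrite -lee_fin; apply: le_trans (measure_ge0 _ _) (hB e).
have [W [oW We hW]] := exists_W nB.
have WB : W `<=` B.
  by move=> x Wx; have := hW e x We Wx; rewrite g_inv_e g_e1.
have mW : d.-measurable W := meas_open oW.
have mWf f : d.-measurable (Defs.rshift mul W f) := meas_open (rshift_open f oW).
have nW : nbhs e W by apply: open_nbhs_nbhs; split.
set w := fine (m W).
have mWw : m W = w%:E.
  rewrite fineK // ge0_fin_numE //.
  by apply: le_lt_trans (m_fin cB); apply: le_measure; rewrite ?inE.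
have w0 : (0 < w)%R by rewrite -lte_fin -mWw; exact: m_pos nW mW.
apply: (@le_lt_trans _ _ (C / w)%:E); last exact: ltry.
apply: ge_ereal_inf.
exists (ereal_sup [set eratio (nu A) (m (setmul mul B A)) | A in cKp m]).
  exists B => //; split => //; exists e; exact: nbhs_singleton.
apply: ge_ereal_sup => _ [A [cA mA0] <-].
set S := setmul mul B A.
have cS : compact S := setmul_compact cB cA.
have mS : d.-measurable S := meas_compact cS.
set s := fine (m S).
have mSs : m S = s%:E by exact: m_real.
have AS : A `<=` S.
  move=> a Aa; exists e; first exact: nbhs_singleton.
  by exists a => //; rewrite g_e1.
have s0 : (0 < s)%R.
  rewrite -lte_fin -mSs; apply: lt_le_trans mA0 _.
  by apply: le_measure; rewrite ?inE //; exact: meas_compact.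
have WAS : forall a, A a -> Defs.rshift mul W a `<=` S.
  move=> a Aa _ [x Wx <-]; exists x; first exact: WB.
  by exists a.
have mSle : m S <= s%:E by rewrite mSs.
have [F [FA pF sz cov]] := packing mWf (fun f => etrans (m_rshift f mW) mWw) w0 mS
  mSle WAS.
have mBf f : d.-measurable (Defs.rshift mul B f) := meas_compact (rshift_compact f cB).
have AU : A `<=` UU B F.
  move=> a Aa; have [f [If [z [[x Wx hx] [y Wy hy]]]]] := cov a Aa.
  apply/UUP; exists f; split => //; exists (mul (inv x) y); first exact: hW.
  by rewrite -g_assoc hy -hx g_assoc g_invl g_e1.
have nuA : nu A <= ((size F)%:R * C)%:E.
  apply: (@le_trans _ _ (nu (UU B F))).
    by apply: le_measure; rewrite ?inE //; [exact: meas_compact| exact: UU_meas].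
  apply: le_trans (UU_le nu B F mBf) _.
  rewrite -sum_cst; apply: lee_sum => f _; exact: hB.
have nuAf : nu A = (fine (nu A))%:E.
  rewrite fineK // ge0_fin_numE //; apply: le_lt_trans nuA _; exact: ltry.
rewrite /eratio mSs /= nuAf -EFinM lee_fin.
move: nuA; rewrite nuAf lee_fin => nuA.
apply: (@le_trans _ _ (((size F)%:R * C) / s)%R).
  by apply: ler_wpM2r => //; rewrite invr_ge0 ltW.
rewrite ler_pdivrMr // mulrAC ler_pdivlMr // mulrAC [(C * s)%R]mulrC.
by apply: ler_wpM2r.
Qed.

Lemma setmul_rshift (K A : set G) x :
  setmul mul K (Defs.rshift mul A x) = Defs.rshift mul (setmul mul K A) x.
Proof.
apply/seteqP; split=> z.
  case=> k Kk [_ [a Aa <-] ->]; exists (mul k a); last by rewrite g_assoc.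
  by exists k => //; exists a.
case=> _ [k Kk [a Aa ->]] <-; exists k => //; exists (mul a x); last by rewrite g_assoc.
by exists a.
Qed.

Lemma part_a2 (nu : {measure set G -> \bar R}) :
  Lplus mul m nu < +oo -> upper_translation_bounded mul inv e nu.
Proof.
move=> /ereal_inf_lt [_ [K [cK [k Kk]] <-] hK].
have hub : forall A, cKp m A ->
    eratio (nu A) (m (setmul mul K A)) <=
    ereal_sup [set eratio (nu A) (m (setmul mul K A)) | A in cKp m].
  by move=> A hA; apply: le_ereal_sup_tmp; exists (eratio (nu A) (m (setmul mul K A))) => //; exists A.
move: (ereal_sup _) hK hub => y hK hub.
have [r hr] : exists r : R, y <= r%:E.
  move: hK; case: y {hub} => [r||] // _; first by exists r.
  by exists 0%R; exact: leNye.
have [B0 [cB0 symB0 nB0]] := exists_sym.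
have mB0 : d.-measurable B0 := meas_compact cB0.
have cKB : compact (setmul mul K B0) := setmul_compact cK cB0.
set b := fine (m (setmul mul K B0)).
have mKB : m (setmul mul K B0) = b%:E := m_real cKB.
have mB0p : 0 < m B0 := m_pos nB0 mB0.
have b0 : (0 < b)%R.
  rewrite -lte_fin -mKB; apply: lt_le_trans mB0p _.
  rewrite -(m_lshift k mB0); apply: le_measure; rewrite ?inE.
  - apply: meas_compact.
    have -> : Defs.lshift mul k B0 = setmul mul [set k] B0.
      apply/seteqP; split=> z; first by case=> a Ba <-; exists k => //; exists a.
      by case=> _ -> [a Ba ->]; exists a.
    exact: setmul_compact (@compact_set1 _ k) cB0.
  - exact: meas_compact.
  - by move=> _ [a Ba <-]; exists k => //; exists a.
exists (r * b)%R, B0; split; first by split.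
move=> x.
set A := Defs.rshift mul B0 x.
have cA : compact A := rshift_compact x cB0.
have := hub A; rewrite /A setmul_rshift (m_rshift x (meas_compact cKB)) mKB.
have mAp : 0 < m A by rewrite /A (m_rshift x mB0).
move=> h; have {h} := h (conj cA mAp).
move=> /le_trans /(_ hr); rewrite /eratio /=.
case: (nu _) => [a||] //=.
- by rewrite -EFinM lee_fin ler_pdivrMr.
- by rewrite mulyr gtr0_sg ?invr_gt0 // mul1e leye_eq.
- by move=> _; exact: leNye.
Qed.

Lemma part_b2 (nu : {measure set G -> \bar R}) :
  0 < Lminus mul m nu -> lower_translation_bounded mul inv e nu.
Proof.
move=> /ereal_sup_gt [_ [K [cK [k Kk]] <-] hK].
have hlb : forall A, cKp m A ->
    ereal_inf [set eratio (nu (setmul mul K A)) (m A) | A in cKp m] <=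
    eratio (nu (setmul mul K A)) (m A).
  by move=> A hA; apply: ge_ereal_inf; exists (eratio (nu (setmul mul K A)) (m A)) => //; exists A.
move: (ereal_inf _) hK hlb => y hK hlb.
have [c [c0 hc]] : exists c : R, (0 < c)%R /\ c%:E <= y.
  move: hK; case: y {hlb} => [r||] //.
    by rewrite lte_fin => r0; exists r.
  by move=> _; exists 1%R; split => //; exact: leey.
have [B0 [cB0 symB0 nB0]] := exists_sym.
have mB0 : d.-measurable B0 := meas_compact cB0.
set b := fine (m B0).
have mB0b : m B0 = b%:E := m_real cB0.
have b0 : (0 < b)%R by rewrite -lte_fin -mB0b; exact: m_pos nB0 mB0.
set KB := setmul mul K B0.
have cKB : compact KB := setmul_compact cK cB0.
have ciKB : compact [set inv z | z in KB].
  by apply: continuous_compact => //; apply: continuous_subspaceT => z; exact: g_cinv.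
set B' := KB `|` [set inv z | z in KB] `|` B0.
have cB' : compact B' by apply: compactU => //; apply: compactU.
exists (c * b)%R, B'; split.
- exact: mulr_gt0.
- split => //.
  + move=> z [[KBz|[u KBu <-]]|B0z].
    * by left; right; exists z.
    * by left; left; rewrite g_invK.
    * by right; exact: symB0.
  + by apply: filterS nB0 => z B0z; right.
move=> x.
set A := Defs.rshift mul B0 x.
have cA : compact A := rshift_compact x cB0.
have mAb : m A = b%:E by rewrite /A (m_rshift x mB0).
have mAp : 0 < m A by rewrite mAb lte_fin.
have := le_trans hc (hlb A (conj cA mAp)).
have le1 : nu (setmul mul K A) <= nu (Defs.rshift mul B' x).
  apply: le_measure; rewrite ?inE.
  - by apply: meas_compact; rewrite /A setmul_rshift; exact: rshift_compact.
  - by apply: meas_compact; exact: rshift_compact.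
  - rewrite /A setmul_rshift => _ [z KBz <-]; exists z => //.
    by left; left.
move: le1; rewrite mAb /eratio /=.
case: (nu (setmul mul K A)) => [a||] //=.
- move=> h; rewrite -EFinM lee_fin => h2.
  have h3 : (c * b <= a)%R by rewrite -ler_pdivlMr.
  by apply: le_trans h; rewrite lee_fin.
- by move=> h _; apply: le_trans h; exact: leey.
- by rewrite mulNyr gtr0_sg ?invr_gt0 // mul1e leeNy_eq.
Qed.

Lemma part_b1 (nu : {measure set G -> \bar R}) :
  lower_translation_bounded mul inv e nu -> 0 < Lminus mul m nu.
Proof.
case=> C [B [C0 [cB symB nB] hB]].
have mB : d.-measurable B := meas_compact cB.
set b := fine (m B).
have mBb : m B = b%:E := m_real cB.
have b0 : (0 < b)%R by rewrite -lte_fin -mBb; exact: m_pos nB mB.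
have Be : B e := nbhs_singleton nB.
set BB := setmul mul B B.
have cBB : compact BB := setmul_compact cB cB.
have mBB : d.-measurable BB := meas_compact cBB.
set be := fine (m BB).
have mBBb : m BB = be%:E := m_real cBB.
have be0 : (0 < be)%R.
  rewrite -lte_fin -mBBb.
  apply: lt_le_trans (m_pos nB mB) _; apply: le_measure; rewrite ?inE //.
  by move=> z Bz; exists e => //; exists z => //; rewrite g_e1.
apply: (@lt_le_trans _ _ (C / be)%:E); first by rewrite lte_fin divr_gt0.
apply: le_ereal_sup_tmp.
exists (ereal_inf [set eratio (nu (setmul mul B A)) (m A) | A in cKp m]).
  by exists B => //; split => //; exists e.
apply/ereal_infP => _ [A [cA mA0] <-].
set S := setmul mul B A.
have cS : compact S := setmul_compact cB cA.
have mS : d.-measurable S := meas_compact cS.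
set s := fine (m S).
have mSle : m S <= s%:E by rewrite (m_real cS).
have mBf f : d.-measurable (Defs.rshift mul B f) := meas_compact (rshift_compact f cB).
have WAS : forall a, A a -> Defs.rshift mul B a `<=` S.
  by move=> a Aa _ [x Bx <-]; exists x => //; exists a.
have [F [FA pF _ cov]] := packing mBf (fun f => etrans (m_rshift f mB) mBb) b0 mS
  mSle WAS.
have nuS : ((size F)%:R * C)%:E <= nu S.
  apply: (@le_trans _ _ (nu (UU B F))); last first.
    apply: le_measure; rewrite ?inE //; first exact: UU_meas.
    by move=> z /UUP [f [If hf]]; exact: (WAS f (FA f If)).
  rewrite (UU_eq nu B F mBf pF) -sum_cst; apply: lee_sum => f _; exact: hB.
have mBBf f : d.-measurable (Defs.rshift mul BB f) := meas_compact (rshift_compact f cBB).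
have mAle : m A <= ((size F)%:R * be)%:E.
  apply: (@le_trans _ _ (m (UU BB F))).
    apply: le_measure; rewrite ?inE //; [exact: meas_compact | exact: UU_meas |].
    move=> a Aa; have [f [If [z [[x Bx hx] [y By hy]]]]] := cov a Aa.
    apply/UUP; exists f; split => //; exists (mul (inv x) y).
      by exists (inv x); [exact: symB | exists y].
    by rewrite -g_assoc hy -hx g_assoc g_invl g_e1.
  apply: le_trans (UU_le m BB F mBBf) _.
  rewrite -sum_cst; apply: lee_sum => f _.
  by rewrite (m_rshift f mBB) mBBb.
have mAa : m A = (fine (m A))%:E := m_real cA.
move: mA0 mAle; rewrite mAa lte_fin lee_fin; set al := fine (m A) => al0 alle.
rewrite /eratio /=.
move: nuS; case: (nu S) => [a||] //=.
- rewrite lee_fin => na; rewrite -EFinM lee_fin.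
  apply: (@le_trans _ _ (((size F)%:R * C) / al)%R); last first.
    by apply: ler_wpM2r => //; rewrite invr_ge0 ltW.
  rewrite ler_pdivrMr // mulrAC ler_pdivlMr // mulrAC [(C * al)%R]mulrC.
  by apply: ler_wpM2r => //; exact: ltW.
- by move=> _; rewrite mulyr gtr0_sg ?invr_gt0 // mul1e leey.
Qed.

End Aux.

Theorem lemma3p8 (R : realType) (d : measure_display) (G : topMeasurableType d)
  (mul : G -> G -> G) (inv : G -> G) (e : G)
  (HG : lc_group mul inv e) (Hunimod : unimodular mul R)
  (m : {measure set G -> \bar R}) (Hm : haar_measure mul m)
  (nu : {measure set G -> \bar R}) :
  [/\ upper_translation_bounded mul inv e nu <-> Lplus mul m nu < +oo,
      lower_translation_bounded mul inv e nu <-> 0 < Lminus mul m nu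
    & delone_measure mul inv e nu <->
        (0 < Lminus mul m nu /\ Lplus mul m nu < +oo)].
Proof.
have a1 := @part_a1 d G mul inv e HG R m Hm Hunimod nu.
have a2 := @part_a2 d G mul inv e HG R m Hm Hunimod nu.
have b1 := @part_b1 d G mul inv e HG R m Hm Hunimod nu.
have b2 := @part_b2 d G mul inv e HG R m Hm Hunimod nu.
split; [by split|by split|].
by split => [[/a1 ? /b1 ?]|[/b2 ? /a2 ?]]; split.
Qed.
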